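(* (Rohlin's Lemma for isometries) Let $S\subseteq\mathbb N$ be infinite. Then the set $\{g\in{\rm Iso}(\mathbb U): \exists n\in S\ g^n=1\}$ is dense in ${\rm Iso}(\mathbb U)$.
   Context: The Urysohn metric space $\mathbb U$ is, up to isometry, the unique complete separable metric space such that every isometric embedding of a finite metric space $\mathbf A$ into $\mathbb U$ extends to any one-point metric extension $\mathbf A\cup\{y\}$. ${\rm Iso}(\mathbb U)$ is its isometry group with the topology of pointwise convergence (basic neighbourhoods of the identity: $\{h: d(hx,x)<\epsilon\ \forall x\in\mathbf A\}$, $\mathbf A$ finite, $\epsilon>0$). *)

(* Defs.v *)
From Stdlib Require Import Reals List.
Open Scope R_scope.

Definition is_metric {X : Type} (d : X -> X -> R) : Prop :=
  (forall x y, 0 <= d x y) /\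
  (forall x y, d x y = 0 <-> x = y) /\
  (forall x y, d x y = d y x) /\
  (forall x y z, d x z <= d x y + d y z).

Definition finite_type (A : Type) : Prop :=
  exists l : list A, forall a, In a l.

Definition cauchy_seq {X : Type} (d : X -> X -> R) (u : nat -> X) : Prop :=
  forall eps, 0 < eps -> exists N, forall m n, (N <= m)%nat -> (N <= n)%nat ->
    d (u m) (u n) < eps.

Definition converges_to {X : Type} (d : X -> X -> R) (u : nat -> X) (l : X) : Prop :=
  forall eps, 0 < eps -> exists N, forall n, (N <= n)%nat -> d (u n) l < eps.

Definition complete_metric {X : Type} (d : X -> X -> R) : Prop :=
  forall u, cauchy_seq d u -> exists l, converges_to d u l.

(* Separable: there is a countable dense subset (given as a sequence).
   (For a nonempty space; the Urysohn extension property applied to the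
   empty space forces nonemptiness.) *)
Definition separable_metric {X : Type} (d : X -> X -> R) : Prop :=
  exists s : nat -> X, forall x eps, 0 < eps -> exists n, d x (s n) < eps.

Definition isometric_embedding {X Y : Type} (dX : X -> X -> R) (dY : Y -> Y -> R)
  (f : X -> Y) : Prop :=
  forall x y, dY (f x) (f y) = dX x y.

(* Extension property: every isometric embedding f of a finite metric space
   (A, dA) into U extends to any one-point metric extension A ∪ {y},
   modelled as [option A] (new point [None]) with a metric dB restricting
   to dA on [A]. *)
Definition urysohn_extension_property {U : Type} (d : U -> U -> R) : Prop :=
  forall (A : Type) (dA : A -> A -> R) (dB : option A -> option A -> R)
         (f : A -> U),
    finite_type A -> is_metric dA -> is_metric dB ->
    (forall a b, dB (Some a) (Some b) = dA a b) ->
    isometric_embedding dA d f ->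
    exists g : option A -> U,
      isometric_embedding dB d g /\ (forall a, g (Some a) = f a).

Definition urysohn_space {U : Type} (d : U -> U -> R) : Prop :=
  is_metric d /\ complete_metric d /\ separable_metric d /\
  urysohn_extension_property d.

Definition is_isometry {U : Type} (d : U -> U -> R) (g : U -> U) : Prop :=
  isometric_embedding d d g /\ (forall y, exists x, g x = y).

Fixpoint fpow {U : Type} (g : U -> U) (n : nat) : U -> U :=
  match n with
  | O => fun x => x
  | S k => fun x => g (fpow g k x)
  end.

Definition infinite_nat_set (S : nat -> Prop) : Prop :=
  forall m, exists n, (m <= n)%nat /\ S n.

(* Density in Iso(U) for the pointwise convergence topology: every basic
   neighbourhood {g : d(g x, h x) < eps for x in A} (A finite) of every
   h in Iso(U) meets the set P. *)
Definition dense_in_Iso {U : Type} (d : U -> U -> R) (P : (U -> U) -> Prop) : Prop :=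
  forall (h : U -> U) (A : list U) (eps : R),
    is_isometry d h -> 0 < eps ->
    exists g, is_isometry d g /\ P g /\ (forall x, In x A -> d (g x) (h x) < eps).

(* Main.v *)
Require Import Defs.
From Stdlib Require Import Reals List Lra Lia Arith ZArith Classical ClassicalEpsilon ProofIrrelevance FunctionalExtensionality.
Open Scope R_scope.

Open Scope R_scope.

Definition pseudo_on (N : nat) (r : nat -> nat -> R) : Prop :=
  forall i j k, (i < N)%nat -> (j < N)%nat -> (k < N)%nat ->
    0 <= r i j /\ r i i = 0 /\ r i j = r j i /\ r i k <= r i j + r j k.

Lemma fin_sig (T : nat -> Prop) (N : nat) : (forall i, T i -> (i < N)%nat) ->
  finite_type {i : nat | T i}.
Proof.
  intros HT.
  destruct (classic (exists i0, T i0)) as [[i0 Hi0]|Hno].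
  - set (mk := fun i => match excluded_middle_informative (T i) with
                   | left H => exist T i H
                   | right _ => exist T i0 Hi0 end).
    exists (map mk (seq 0 N)).
    intros [i Hi]. apply in_map_iff. exists i. split.
    + unfold mk. destruct (excluded_middle_informative (T i)) as [H|H].
      * f_equal. apply proof_irrelevance.
      * contradiction.
    + apply in_seq. specialize (HT i Hi). lia.
  - exists nil. intros [i Hi]. exfalso. apply Hno. eauto.
Qed.

Lemma rep_exists {U : Type} (T : nat -> Prop) (g : nat -> U) :
  forall i, T i -> exists i0, (T i0 /\ forall j, (j < i0)%nat -> T j -> g j <> g i0) /\ g i0 = g i.
Proof.
  intro i. induction i as [i IH] using lt_wf_ind. intros Ti.
  destruct (classic (exists j, (j < i)%nat /\ T j /\ g j = g i)) as [[j [Hj [Tj Hg]]]|Hno].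
  - destruct (IH j Hj Tj) as [i0 [H1 H2]]. exists i0. split; auto. congruence.
  - exists i. split; auto. split; auto. intros j Hj Tj E. apply Hno. eauto.
Qed.

Lemma ext_point {U : Type} (d : U -> U -> R) (r : nat -> nat -> R) (N : nat)
  (T : nat -> Prop) (g : nat -> U) (w : nat) :
  is_metric d -> urysohn_extension_property d -> pseudo_on N r ->
  (forall i, T i -> (i < N)%nat) -> (w < N)%nat -> ~ T w ->
  (forall i, T i -> 0 < r i w) ->
  (forall i j, T i -> T j -> d (g i) (g j) = r i j) ->
  exists g', (forall i, T i -> g' i = g i) /\
    (forall i j, (T i \/ i = w) -> (T j \/ j = w) -> d (g' i) (g' j) = r i j).
Proof.
  intros Hd Hu Hr HT Hw HTw Hpos Hg.
  destruct Hd as [d0 [dz [ds dt]]].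
  set (Rep := fun i => T i /\ forall j, (j < i)%nat -> T j -> g j <> g i).
  set (A := {i : nat | Rep i}).
  set (dA := fun a b : A => r (proj1_sig a) (proj1_sig b)).
  set (idx := fun o : option A => match o with None => w | Some a => proj1_sig a end).
  set (dB := fun o1 o2 : option A => r (idx o1) (idx o2)).
  set (f := fun a : A => g (proj1_sig a)).
  assert (HN : forall o, (idx o < N)%nat).
  { intros [[a Ha]|]; simpl; [apply HT; apply Ha|auto]. }
  assert (rep_inj : forall a b : A, d (g (proj1_sig a)) (g (proj1_sig b)) = 0 -> a = b).
  { intros [a Ha] [b Hb]; simpl; intros E. apply dz in E.
    pose proof Ha as [Ta Ra]. pose proof Hb as [Tb Rb].
    assert (a = b).
    { destruct (lt_eq_lt_dec a b) as [[H|H]|H]; auto.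
      - exfalso. exact (Rb a H Ta E).
      - exfalso. exact (Ra b H Tb (eq_sym E)). }
    subst b. f_equal. apply proof_irrelevance. }
  assert (MA : is_metric dA).
  { unfold dA. split; [|split; [|split]].
    - intros a b. destruct (Hr (proj1_sig a) (proj1_sig b) (proj1_sig a)) as [? _]; auto;
      apply HT; apply (proj2_sig a) || apply (proj2_sig b).
    - intros a b. split.
      + intros E. apply rep_inj. rewrite Hg; auto; apply (proj2_sig a) || apply (proj2_sig b).
      + intros E; rewrite <- E. destruct (Hr (proj1_sig a) (proj1_sig a) (proj1_sig a)) as [_ [? _]]; auto;
        apply HT; apply (proj2_sig a).
    - intros a b. destruct (Hr (proj1_sig a) (proj1_sig b) (proj1_sig a)) as [_ [_ [? _]]]; auto;
      apply HT; apply (proj2_sig a) || apply (proj2_sig b).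
    - intros a b c. destruct (Hr (proj1_sig a) (proj1_sig b) (proj1_sig c)) as [_ [_ [_ ?]]]; auto;
      apply HT; apply (proj2_sig a) || apply (proj2_sig b) || apply (proj2_sig c). }
  assert (MB : is_metric dB).
  { unfold dB. split; [|split; [|split]].
    - intros a b. destruct (Hr (idx a) (idx b) (idx a)) as [? _]; auto.
    - intros [a|] [b|]; simpl; split.
      + intros E. f_equal. apply rep_inj. rewrite Hg; auto; apply (proj2_sig a) || apply (proj2_sig b).
      + intros E; injection E as E'; rewrite <- E'. destruct (Hr (proj1_sig a) (proj1_sig a) (proj1_sig a)) as [_ [? _]]; auto; apply HT; apply (proj2_sig a).
      + intros E. exfalso. pose proof (Hpos (proj1_sig a) (proj1 (proj2_sig a))). lra.
      + discriminate.
      + intros E. exfalso. pose proof (Hpos (proj1_sig b) (proj1 (proj2_sig b))).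
        destruct (Hr w (proj1_sig b) w) as [_ [_ [Hs _]]]; auto; try (apply HT; apply (proj2_sig b)). lra.
      + discriminate.
      + auto.
      + intros _. destruct (Hr w w w) as [_ [? _]]; auto.
    - intros a b. destruct (Hr (idx a) (idx b) (idx a)) as [_ [_ [? _]]]; auto.
    - intros a b c. destruct (Hr (idx a) (idx b) (idx c)) as [_ [_ [_ ?]]]; auto. }
  assert (Hfin : finite_type A).
  { apply (fin_sig Rep N). intros i [Ti _]. auto. }
  assert (Hf : isometric_embedding dA d f).
  { intros a b. unfold f, dA. apply Hg; apply (proj2_sig a) || apply (proj2_sig b). }
  destruct (Hu A dA dB f Hfin MA MB (fun a b => eq_refl) Hf) as [G [HG1 HG2]].
  exists (fun i => if Nat.eq_dec i w then G None else g i).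
  assert (Hrw : forall i, T i -> d (g i) (G None) = r i w).
  { intros i Ti. destruct (rep_exists T g i Ti) as [i0 [R0 E0]].
    pose (a := exist Rep i0 R0 : A).
    replace (g i) with (f a) by (unfold f; simpl; auto).
    rewrite <- (HG2 a). rewrite HG1. unfold dB; simpl.
    assert (Ti0 : T i0) by (destruct R0; auto).
    assert (E : r i i0 = 0).
    { rewrite <- Hg; auto. rewrite E0. apply dz. auto. }
    destruct (Hr i i0 w) as [_ [_ [S1 T1]]]; auto.
    destruct (Hr i0 i w) as [_ [_ [_ T2]]]; auto.
    lra. }
  split.
  - intros i Ti. destruct (Nat.eq_dec i w); subst; [contradiction|auto].
  - intros i j Hi Hj.
    destruct (Nat.eq_dec i w) as [ei|ei]; destruct (Nat.eq_dec j w) as [ej|ej]; subst.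
    + destruct (Hr w w w) as [_ [-> _]]; auto. apply dz; auto.
    + destruct Hj as [Hj|Hj]; [|contradiction]. rewrite ds. rewrite Hrw; auto.
      destruct (Hr j w j) as [_ [_ [? _]]]; auto.
    + destruct Hi as [Hi|Hi]; [|contradiction]. apply Hrw; auto.
    + destruct Hi as [Hi|Hi]; [|contradiction]. destruct Hj as [Hj|Hj]; [|contradiction]. auto.
Qed.

Lemma ext_all {U : Type} (d : U -> U -> R) (r : nat -> nat -> R) (N : nat)
  (P : nat -> Prop) (f : nat -> U) :
  is_metric d -> urysohn_extension_property d -> pseudo_on N r ->
  (forall i, P i -> (i < N)%nat) ->
  (forall i j, (i < N)%nat -> (j < N)%nat -> ~ P j -> i <> j -> 0 < r i j) ->
  (forall i j, P i -> P j -> d (f i) (f j) = r i j) ->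
  exists g, (forall i, P i -> g i = f i) /\
    (forall i j, (i < N)%nat -> (j < N)%nat -> d (g i) (g j) = r i j).
Proof.
  intros Hd Hu Hr HP Hpos Hf.
  assert (Claim : forall K, exists g, (forall i, P i -> g i = f i) /\
     (forall i j, (P i \/ (i < K /\ i < N)%nat) -> (P j \/ (j < K /\ j < N)%nat) -> d (g i) (g j) = r i j)).
  { induction K as [|K [g [Hg1 Hg2]]].
    - exists f. split; auto. intros i j [Hi|Hi] [Hj|Hj]; auto; lia.
    - destruct (classic (P K \/ (N <= K)%nat)) as [Hc|Hc].
      + exists g. split; auto. intros i j Hi Hj. apply Hg2.
        * destruct Hi as [Hi|Hi]; auto. destruct (Nat.eq_dec i K); [subst; destruct Hc; auto; lia|right; lia].
        * destruct Hj as [Hj|Hj]; auto. destruct (Nat.eq_dec j K); [subst; destruct Hc; auto; lia|right; lia].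
      + apply not_or_and in Hc. destruct Hc as [HPK HNK].
        destruct (ext_point d r N (fun i => P i \/ (i < K /\ i < N)%nat) g K Hd Hu Hr) as [g' [H1 H2]].
        * intros i [Hi|Hi]; auto; lia.
        * lia.
        * intros [H|H]; auto; lia.
        * intros i Hi. apply Hpos; auto.
          -- destruct Hi as [Hi|Hi]; auto; lia.
          -- lia.
          -- intro E; subst. destruct Hi; auto; lia.
        * auto.
        * exists g'. split.
          -- intros i Hi. rewrite H1; auto.
          -- intros i j Hi Hj. apply H2.
             ++ destruct Hi as [Hi|Hi]; auto. destruct (Nat.eq_dec i K); auto. left; right; lia.
             ++ destruct Hj as [Hj|Hj]; auto. destruct (Nat.eq_dec j K); auto. left; right; lia. }
  destruct (Claim N) as [g [H1 H2]]. exists g. split; auto.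
Qed.

Open Scope R_scope.

Lemma fpow_add {X : Type} (g : X -> X) a b x : fpow g (a + b) x = fpow g a (fpow g b x).
Proof. induction a; simpl; auto. rewrite IHa; auto. Qed.

Lemma fpow_shift {X : Type} (g : X -> X) a x : fpow g a (g x) = fpow g (S a) x.
Proof. replace (S a) with (a + 1)%nat by lia. rewrite fpow_add. reflexivity. Qed.

Lemma fpow_iso {X : Type} (d : X -> X -> R) (g : X -> X) k x y :
  isometric_embedding d d g -> d (fpow g k x) (fpow g k y) = d x y.
Proof. intros H. induction k; simpl; auto. rewrite H; auto. Qed.

Open Scope nat_scope.
Definition sg (n u : nat) : nat := u / n * n + (S (u mod n)) mod n.

Lemma divmod_eq (n q r : nat) : (0 < n)%nat -> (r < n)%nat -> ((q * n + r) / n = q /\ (q * n + r) mod n = r)%nat.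
Proof.
  intros Hn Hr. split.
  - rewrite Nat.add_comm, Nat.div_add by lia. rewrite Nat.div_small by lia. lia.
  - rewrite Nat.add_comm, Nat.Div0.mod_add. apply Nat.mod_small; lia.
Qed.

Lemma sg_closed n a u : (0 < n)%nat -> fpow (sg n) a u = u / n * n + (u mod n + a) mod n.
Proof.
  intros Hn. induction a as [|a IH]; simpl.
  - rewrite Nat.add_0_r, Nat.Div0.mod_mod. rewrite Nat.mul_comm. rewrite <- Nat.div_mod_eq. reflexivity.
  - rewrite IH. unfold sg.
    assert (Hr : ((u mod n + a) mod n < n)%nat) by (apply Nat.mod_upper_bound; lia).
    destruct (divmod_eq n (u / n) _ Hn Hr) as [E1 E2]. rewrite E1, E2.
    f_equal. rewrite <- Nat.add_1_r. rewrite Nat.Div0.add_mod_idemp_l. f_equal. lia.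
Qed.

Lemma sg_div n a u : (0 < n)%nat -> fpow (sg n) a u / n = u / n.
Proof.
  intros Hn. rewrite sg_closed by auto. apply divmod_eq; auto. apply Nat.mod_upper_bound; lia.
Qed.

Lemma sg_mod n a u : (0 < n)%nat -> fpow (sg n) a u mod n = (u mod n + a) mod n.
Proof.
  intros Hn. rewrite sg_closed by auto. apply divmod_eq; auto. apply Nat.mod_upper_bound; lia.
Qed.

Lemma sg_n n u : (0 < n)%nat -> fpow (sg n) n u = u.
Proof.
  intros Hn. rewrite sg_closed by auto.
  rewrite <- Nat.Div0.add_mod_idemp_r, Nat.Div0.mod_same, Nat.add_0_r, Nat.Div0.mod_mod.
  rewrite Nat.mul_comm. rewrite <- Nat.div_mod_eq. reflexivity.
Qed.

Lemma sg_modexp n a u : (0 < n)%nat -> fpow (sg n) a u = fpow (sg n) (a mod n) u.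
Proof.
  intros Hn. rewrite !sg_closed by auto. rewrite Nat.Div0.add_mod_idemp_r. reflexivity.
Qed.

Lemma sg_lt n a u L : (0 < n)%nat -> (u < L * n)%nat -> (fpow (sg n) a u < L * n)%nat.
Proof.
  intros Hn Hu. rewrite sg_closed by auto.
  assert (u / n < L)%nat by (apply Nat.Div0.div_lt_upper_bound; lia).
  assert ((u mod n + a) mod n < n)%nat by (apply Nat.mod_upper_bound; lia).
  nia.
Qed.

Lemma sg1 n u : fpow (sg n) 1 u = sg n u.
Proof. reflexivity. Qed.

Close Scope nat_scope.

Open Scope R_scope.

Section Wind.
Variable U : Type.
Variable d : U -> U -> R.
Variable h : U -> U.
Hypothesis Hd : is_metric d.
Hypothesis Hh : isometric_embedding d d h.
Variable C delta : R.

Definition Dz (x y : U) (t : Z) : R := d (fpow h (Z.to_nat (- t)) x) (fpow h (Z.to_nat t) y).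
Definition phi (x y : U) (t : Z) : R := Rmin (Dz x y t) C + IZR (Z.abs t) * delta.

Lemma dsym x y : d x y = d y x. Proof. destruct Hd as [_ [_ [? _]]]; auto. Qed.
Lemma dtri x y z : d x z <= d x y + d y z. Proof. destruct Hd as [_ [_ [_ ?]]]; auto. Qed.
Lemma dnn x y : 0 <= d x y. Proof. destruct Hd as [? _]; auto. Qed.

Lemma Dz_key a b x y : d (fpow h a x) (fpow h b y) = Dz x y (Z.of_nat b - Z.of_nat a).
Proof.
  unfold Dz. destruct (le_lt_dec a b) as [H|H].
  - replace b with (a + (b - a))%nat at 1 by lia. rewrite fpow_add, fpow_iso by auto.
    replace (Z.to_nat (- (Z.of_nat b - Z.of_nat a))) with 0%nat by lia.
    replace (Z.to_nat (Z.of_nat b - Z.of_nat a)) with (b - a)%nat by lia. reflexivity.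
  - replace a with (b + (a - b))%nat at 1 by lia. rewrite fpow_add, fpow_iso by auto.
    replace (Z.to_nat (- (Z.of_nat b - Z.of_nat a))) with (a - b)%nat by lia.
    replace (Z.to_nat (Z.of_nat b - Z.of_nat a)) with 0%nat by lia. reflexivity.
Qed.

Lemma Dz_tri x y z t1 t2 : Dz x z (t1 + t2) <= Dz x y t1 + Dz y z t2.
Proof.
  set (N := Z.to_nat (Z.abs t1 + Z.abs t2)).
  set (a1 := Z.to_nat (Z.of_nat N + t1)).
  set (a2 := Z.to_nat (Z.of_nat N + t1 + t2)).
  assert (E1 : Dz x y t1 = d (fpow h N x) (fpow h a1 y)).
  { rewrite Dz_key. f_equal. unfold a1, N. lia. }
  assert (E2 : Dz y z t2 = d (fpow h a1 y) (fpow h a2 z)).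
  { rewrite Dz_key. f_equal. unfold a1, a2, N. lia. }
  assert (E3 : Dz x z (t1 + t2) = d (fpow h N x) (fpow h a2 z)).
  { rewrite Dz_key. f_equal. unfold a2, N. lia. }
  rewrite E1, E2, E3. apply dtri.
Qed.

Lemma Dz_sym x y t : Dz y x (- t) = Dz x y t.
Proof. unfold Dz. rewrite Z.opp_involutive. apply dsym. Qed.

Lemma Dz_nn x y t : 0 <= Dz x y t. Proof. apply dnn. Qed.

Hypothesis Hdel : 0 < delta.
Hypothesis HC : 1 <= C.

Lemma IZR_abs_nn t : 0 <= IZR (Z.abs t). Proof. apply IZR_le. lia. Qed.

Lemma phi_nn x y t : 0 <= phi x y t.
Proof.
  unfold phi. pose proof (Dz_nn x y t). pose proof (IZR_abs_nn t).
  apply Rplus_le_le_0_compat; [unfold Rmin; destruct Rle_dec; lra|nra].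
Qed.

Lemma phi_ge x y t : IZR (Z.abs t) * delta <= phi x y t.
Proof.
  unfold phi. pose proof (Dz_nn x y t). unfold Rmin; destruct Rle_dec; lra.
Qed.

Lemma phi_le x y t : phi x y t <= C + IZR (Z.abs t) * delta.
Proof. unfold phi. pose proof (Rmin_r (Dz x y t) C). lra. Qed.

Lemma phi_tri x y z t1 t2 : phi x z (t1 + t2) <= phi x y t1 + phi y z t2.
Proof.
  unfold phi. pose proof (Dz_tri x y z t1 t2).
  pose proof (Dz_nn x y t1). pose proof (Dz_nn y z t2).
  assert (IZR (Z.abs (t1 + t2)) <= IZR (Z.abs t1) + IZR (Z.abs t2)).
  { rewrite <- plus_IZR. apply IZR_le. lia. }
  assert (Rmin (Dz x z (t1 + t2)) C <= Rmin (Dz x y t1) C + Rmin (Dz y z t2) C).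
  { unfold Rmin. repeat destruct Rle_dec; lra. }
  nra.
Qed.

Lemma phi_sym x y t : phi y x (- t) = phi x y t.
Proof. unfold phi. rewrite Dz_sym. rewrite Z.abs_opp. reflexivity. Qed.


Variable xs : list U.
Variable x0 : U.
Variable n : nat.
Hypothesis Hn : (2 <= n)%nat.
Hypothesis Hnd : NoDup xs.
Hypothesis HCb : forall j j', (j < length xs)%nat -> (j' < length xs)%nat ->
  d (nth j xs x0) (nth j' xs x0) <= C.
Hypothesis Hnd2 : 2 * C <= INR n * delta.

Definition Xof (u : nat) : U := nth (u / n) xs x0.
Definition zi (u : nat) : Z := Z.of_nat (u mod n).
Definition nZ : Z := Z.of_nat n.
Definition rho (u v : nat) : R :=
  let o := Z.modulo (zi v - zi u) nZ in
  if Z.eq_dec o 0 then phi (Xof u) (Xof v) 0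
  else Rmin (phi (Xof u) (Xof v) o) (phi (Xof u) (Xof v) (o - nZ)).

Lemma nZ_pos : (0 < nZ)%Z. Proof. unfold nZ. lia. Qed.

Lemma zi_bound u : (0 <= zi u < nZ)%Z.
Proof. unfold zi, nZ. pose proof (Nat.mod_upper_bound u n). lia. Qed.

Lemma mod_div_sub (D : Z) : (nZ | D - D mod nZ)%Z.
Proof.
  pose proof nZ_pos. rewrite Z.mod_eq by lia. exists (D / nZ)%Z. ring.
Qed.

Lemma rho_att u v : exists t, rho u v = phi (Xof u) (Xof v) t /\
  (nZ | zi v - zi u - t)%Z /\ (Z.abs t < nZ)%Z.
Proof.
  pose proof nZ_pos as Hp. unfold rho.
  set (D := (zi v - zi u)%Z).
  pose proof (mod_div_sub D) as HD.
  pose proof (Z.mod_pos_bound D nZ Hp) as Hb.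
  destruct (Z.eq_dec (D mod nZ) 0) as [E|E].
  - exists 0%Z. rewrite E in HD. rewrite Z.sub_0_r in HD. split; auto. split; [rewrite Z.sub_0_r; auto|simpl; lia].
  - unfold Rmin. destruct Rle_dec.
    + exists (D mod nZ)%Z. split; auto. split; auto. lia.
    + exists (D mod nZ - nZ)%Z. split; auto. split; [|lia].
      replace (D - (D mod nZ - nZ))%Z with ((D - D mod nZ) + nZ)%Z by ring.
      apply Z.divide_add_r; auto. apply Z.divide_refl.
Qed.

Lemma rho_le u v t : (nZ | zi v - zi u - t)%Z -> (Z.abs t < nZ)%Z ->
  rho u v <= phi (Xof u) (Xof v) t.
Proof.
  intros Ht Hta. pose proof nZ_pos as Hp. unfold rho.
  set (D := (zi v - zi u)%Z) in *.
  pose proof (mod_div_sub D) as HD.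
  pose proof (Z.mod_pos_bound D nZ Hp) as Hb.
  assert (Hk : (nZ | t - D mod nZ)%Z).
  { replace (t - D mod nZ)%Z with ((D - D mod nZ) - (D - t))%Z by ring.
    apply Z.divide_sub_r; auto. }
  destruct Hk as [k Hk].
  assert (k = 0 \/ k = -1)%Z as [->| ->] by nia.
  - assert (t = D mod nZ)%Z by lia. subst t.
    destruct (Z.eq_dec (D mod nZ) 0) as [E|E].
    + rewrite E. lra.
    + apply Rmin_l.
  - assert (t = D mod nZ - nZ)%Z by lia. subst t.
    destruct (Z.eq_dec (D mod nZ) 0) as [E|E].
    + exfalso. lia.
    + apply Rmin_r.
Qed.

Lemma nZ_INR : IZR nZ = INR n.
Proof. unfold nZ. rewrite INR_IZR_INZ. reflexivity. Qed.

Lemma rho_bound u v : rho u v <= C + INR n * delta / 2.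
Proof.
  pose proof nZ_pos as Hp. unfold rho.
  set (D := (zi v - zi u)%Z).
  pose proof (Z.mod_pos_bound D nZ Hp) as Hb.
  destruct (Z.eq_dec (D mod nZ) 0) as [E|E].
  - pose proof (phi_le (Xof u) (Xof v) 0). simpl in H. pose proof (pos_INR n). nra.
  - destruct (Z_le_gt_dec (2 * (D mod nZ)) nZ) as [H|H].
    + eapply Rle_trans; [apply Rmin_l|]. eapply Rle_trans; [apply phi_le|].
      assert (2 * IZR (Z.abs (D mod nZ)) <= IZR nZ).
      { rewrite <- mult_IZR. apply IZR_le. lia. }
      rewrite nZ_INR in H0. nra.
    + eapply Rle_trans; [apply Rmin_r|]. eapply Rle_trans; [apply phi_le|].
      assert (2 * IZR (Z.abs (D mod nZ - nZ)) <= IZR nZ).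
      { rewrite <- mult_IZR. apply IZR_le. lia. }
      rewrite nZ_INR in H0. nra.
Qed.

Lemma rho_nn u v : 0 <= rho u v.
Proof. destruct (rho_att u v) as [t [-> _]]. apply phi_nn. Qed.

Lemma rho_refl u : rho u u = 0.
Proof.
  apply Rle_antisym; [|apply rho_nn].
  eapply Rle_trans; [apply (rho_le u u 0)|].
  - replace (zi u - zi u - 0)%Z with 0%Z by ring. apply Z.divide_0_r.
  - pose proof nZ_pos. simpl. lia.
  - unfold phi, Dz. simpl. destruct Hd as [_ [dz _]].
    rewrite (proj2 (dz _ _) eq_refl). unfold Rmin. destruct Rle_dec; lra.
Qed.

Lemma rho_sym u v : rho u v = rho v u.
Proof.
  assert (forall u v, rho v u <= rho u v).
  { clear u v. intros u v. destruct (rho_att u v) as [t [E [Ht Hta]]]. rewrite E.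
    rewrite <- phi_sym. apply rho_le.
    - replace (zi u - zi v - - t)%Z with (- (zi v - zi u - t))%Z by ring.
      apply Z.divide_opp_r. auto.
    - lia. }
  apply Rle_antisym; auto.
Qed.

Lemma rho_tri u v w : rho u w <= rho u v + rho v w.
Proof.
  destruct (rho_att u v) as [t1 [E1 [H1 A1]]].
  destruct (rho_att v w) as [t2 [E2 [H2 A2]]].
  rewrite E1, E2.
  destruct (Z_lt_le_dec (Z.abs (t1 + t2)) nZ) as [Hs|Hs].
  - eapply Rle_trans; [apply (rho_le u w (t1 + t2))|apply phi_tri]; auto.
    replace (zi w - zi u - (t1 + t2))%Z with ((zi v - zi u - t1) + (zi w - zi v - t2))%Z by ring.
    apply Z.divide_add_r; auto.
  - pose proof (phi_ge (Xof u) (Xof v) t1). pose proof (phi_ge (Xof v) (Xof w) t2).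
    pose proof (rho_bound u w).
    assert (IZR nZ <= IZR (Z.abs t1) + IZR (Z.abs t2)).
    { rewrite <- plus_IZR. apply IZR_le. lia. }
    rewrite nZ_INR in H4. nra.
Qed.


Lemma rho_pos u v : (u < length xs * n)%nat -> (v < length xs * n)%nat -> u <> v -> 0 < rho u v.
Proof.
  intros Hu Hv Huv. destruct (Rlt_or_le 0 (rho u v)) as [H|H]; auto. exfalso.
  destruct (rho_att u v) as [t [E [Ht Hta]]]. rewrite E in H.
  pose proof (phi_nn (Xof u) (Xof v) t).
  pose proof (phi_ge (Xof u) (Xof v) t).
  assert (Ht0 : t = 0%Z).
  { destruct (Z.eq_dec t 0) as [|Hne]; auto. exfalso.
    assert (1 <= IZR (Z.abs t)) by (apply IZR_le; lia). nra. }
  subst t. rewrite Z.sub_0_r in Ht.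
  pose proof (zi_bound u). pose proof (zi_bound v).
  destruct Ht as [k Hk].
  assert (k = 0%Z) by nia. subst k.
  assert (Hm : (u mod n = v mod n)%nat) by (unfold zi in Hk; lia).
  unfold phi, Dz in H. simpl in H. rewrite Rmult_0_l, Rplus_0_r in H.
  assert (Hx : d (Xof u) (Xof v) = 0).
  { pose proof (dnn (Xof u) (Xof v)). unfold Rmin in H; destruct Rle_dec; lra. }
  destruct Hd as [_ [dz _]]. apply dz in Hx. unfold Xof in Hx.
  assert (Hq : (u / n = v / n)%nat).
  { eapply NoDup_nth; eauto.
    - apply Nat.Div0.div_lt_upper_bound. lia.
    - apply Nat.Div0.div_lt_upper_bound. lia. }
  apply Huv. rewrite (Nat.div_mod_eq u n), (Nat.div_mod_eq v n). lia.
Qed.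

Lemma Xof_sg u : Xof (sg n u) = Xof u.
Proof. unfold Xof. change (sg n u) with (fpow (sg n) 1 u). rewrite sg_div by lia. reflexivity. Qed.

Lemma zi_sg u : (nZ | zi (sg n u) - zi u - 1)%Z.
Proof.
  change (sg n u) with (fpow (sg n) 1 u). unfold zi. rewrite sg_mod by lia.
  rewrite Nat2Z.inj_mod. fold nZ. rewrite Nat2Z.inj_add.
  set (D := (Z.of_nat (u mod n) + Z.of_nat 1)%Z).
  pose proof (mod_div_sub D) as HD.
  replace (D mod nZ - Z.of_nat (u mod n) - 1)%Z with (- (D - D mod nZ))%Z by (unfold D; lia).
  apply Z.divide_opp_r. auto.
Qed.

Lemma cong_sg u v t : (nZ | zi (sg n v) - zi (sg n u) - t)%Z <-> (nZ | zi v - zi u - t)%Z.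
Proof.
  pose proof (zi_sg u). pose proof (zi_sg v).
  split; intros H1.
  - replace (zi v - zi u - t)%Z with ((zi (sg n v) - zi (sg n u) - t) - (zi (sg n v) - zi v - 1) + (zi (sg n u) - zi u - 1))%Z by ring.
    apply Z.divide_add_r; [apply Z.divide_sub_r|]; auto.
  - replace (zi (sg n v) - zi (sg n u) - t)%Z with ((zi v - zi u - t) + (zi (sg n v) - zi v - 1) - (zi (sg n u) - zi u - 1))%Z by ring.
    apply Z.divide_sub_r; [apply Z.divide_add_r|]; auto.
Qed.

Lemma rho_inv u v : rho (sg n u) (sg n v) = rho u v.
Proof.
  apply Rle_antisym.
  - destruct (rho_att u v) as [t [E [Ht Hta]]]. rewrite E.
    rewrite <- (Xof_sg u), <- (Xof_sg v). apply rho_le; auto. apply cong_sg; auto.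
  - destruct (rho_att (sg n u) (sg n v)) as [t [E [Ht Hta]]]. rewrite E.
    rewrite (Xof_sg u), (Xof_sg v). apply rho_le; auto. apply cong_sg; auto.
Qed.

Lemma rho_copy0 u v : (u mod n = 0)%nat -> (v mod n = 0)%nat ->
  (u / n < length xs)%nat -> (v / n < length xs)%nat -> rho u v = d (Xof u) (Xof v).
Proof.
  intros Hu Hv Hu' Hv'. destruct (rho_att u v) as [t [E [Ht Hta]]]. rewrite E.
  unfold zi in Ht. rewrite Hu, Hv in Ht. simpl in Ht.
  destruct Ht as [k Hk]. assert (k = 0%Z) by nia. subst k. assert (t = 0%Z) by lia. subst t.
  unfold phi, Dz. simpl. rewrite Rmult_0_l, Rplus_0_r.
  unfold Rmin. destruct Rle_dec as [|H]; auto. exfalso. apply H. apply HCb; auto.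
Qed.

Lemma rho_approx u v : (u mod n = 0)%nat -> (v mod n = 0)%nat -> Xof v = h (Xof u) ->
  rho (sg n u) v <= delta.
Proof.
  intros Hu Hv Hx.
  assert (Hs : (sg n u mod n = 1)%nat).
  { change (sg n u) with (fpow (sg n) 1 u). rewrite sg_mod by lia. rewrite Hu. apply Nat.mod_small. lia. }
  eapply Rle_trans; [apply (rho_le _ _ (-1))|].
  - unfold zi. rewrite Hs, Hv. simpl. apply Z.divide_0_r.
  - unfold nZ. simpl. lia.
  - unfold phi, Dz. simpl. rewrite Xof_sg, Hx.
    destruct Hd as [_ [dz _]]. rewrite (proj2 (dz _ _) eq_refl).
    unfold Rmin. destruct Rle_dec; lra.
Qed.

End Wind.

Open Scope R_scope.

Definition Inv {U : Type} (d : U -> U -> R) (n : nat) (p : nat -> U) (L : nat) : Prop :=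
  forall u v, (u < L * n)%nat -> (v < L * n)%nat -> d (p (sg n u)) (p (sg n v)) = d (p u) (p v).

Lemma bound1 (G : nat -> R) (m : nat) : exists C, 1 <= C /\ forall j, (j < m)%nat -> G j <= C.
Proof.
  induction m as [|m [C [H1 H2]]].
  - exists 1. split; [lra|]. intros; lia.
  - exists (Rmax C (G m)). split.
    + eapply Rle_trans; [apply H1|apply Rmax_l].
    + intros j Hj. destruct (Nat.eq_dec j m) as [->|Hne]; [apply Rmax_r|].
      eapply Rle_trans; [apply H2; lia|apply Rmax_l].
Qed.

Lemma bound2 (F : nat -> nat -> R) (m : nat) : exists C, 1 <= C /\
  forall j j', (j < m)%nat -> (j' < m)%nat -> F j j' <= C.
Proof.
  destruct (bound1 (fun k => F (k / m) (k mod m))%nat (m * m)) as [C [H1 H2]].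
  exists C. split; auto. intros j j' Hj Hj'.
  specialize (H2 (j * m + j')%nat). simpl in H2.
  assert (E : ((j * m + j') / m = j /\ (j * m + j') mod m = j')%nat) by (apply divmod_eq; lia).
  destruct E as [E1 E2]. rewrite E1, E2 in H2. apply H2. nia.
Qed.

Lemma initial {U : Type} (d : U -> U -> R) (h : U -> U) (A : list U) (x0 : U) (eps : R) :
  is_metric d -> urysohn_extension_property d -> isometric_embedding d d h -> 0 < eps ->
  exists N0 : nat, forall n, (N0 <= n)%nat -> exists m p, (1 <= m)%nat /\ Inv d n p m /\
    forall a, In a A -> exists u, (u < m * n)%nat /\ p u = a /\ d (p (sg n u)) (h a) < eps.
Proof.
  intros Hd Hu Hh He.
  pose (dec := fun x y : U => excluded_middle_informative (x = y)).
  set (xs := nodup dec (x0 :: A ++ map h A)).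
  assert (Hnd : NoDup xs) by apply NoDup_nodup.
  assert (Hin : forall a, In a (x0 :: A ++ map h A) -> In a xs) by (intros; apply nodup_In; auto).
  set (m := length xs).
  assert (Hm : (1 <= m)%nat).
  { assert (L1 : forall l : list U, In x0 l -> (1 <= length l)%nat) by (intros [|? ?]; simpl; [tauto|lia]).
    apply L1. apply Hin. left; auto. }
  destruct (bound2 (fun j j' => d (nth j xs x0) (nth j' xs x0)) m) as [C [HC HCb]].
  set (delta := eps / 2).
  assert (Hdel : 0 < delta) by (unfold delta; lra).
  destruct (archimed (2 * C / delta)) as [Hz _].
  exists (Nat.max 2 (Z.to_nat (up (2 * C / delta)))).
  intros n Hn.
  assert (Hn2 : (2 <= n)%nat) by lia.
  assert (Hnd2 : 2 * C <= INR n * delta).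
  { assert (IZR (up (2 * C / delta)) <= INR n).
    { rewrite INR_IZR_INZ. apply IZR_le.
      destruct (Z_lt_le_dec (up (2 * C / delta)) 0); lia. }
    assert (2 * C / delta * delta = 2 * C) by (field; lra).
    nra. }
  set (r := rho U d h C delta xs x0 n).
  assert (Hps : pseudo_on (m * n) r).
  { intros i j k _ _ _. unfold r. split; [|split; [|split]].
    - apply rho_nn; auto; try lia.
    - apply rho_refl; auto; try lia.
    - apply rho_sym; auto; try lia.
    - apply rho_tri; auto; try lia. }
  destruct (ext_all d r (m * n) (fun u => (u mod n = 0)%nat /\ (u < m * n)%nat) (Xof U xs x0 n) Hd Hu Hps)
    as [p [Hp1 Hp2]].
  - intros i [_ Hi]; auto.
  - intros i j Hi Hj _ Hij. unfold r. apply rho_pos; auto; lia.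
  - intros i j [Hi Hi'] [Hj Hj']. unfold r. symmetry. apply rho_copy0; auto; try lia.
    + apply Nat.Div0.div_lt_upper_bound. lia.
    + apply Nat.Div0.div_lt_upper_bound. lia.
  - exists m, p. split; [auto|split].
    + intros u v Hu1 Hv1.
      assert (sg n u < m * n)%nat by (change (sg n u) with (fpow (sg n) 1 u); apply sg_lt; lia).
      assert (sg n v < m * n)%nat by (change (sg n v) with (fpow (sg n) 1 v); apply sg_lt; lia).
      rewrite !Hp2 by auto. unfold r. apply rho_inv; auto; lia.
    + intros a Ha.
      destruct (In_nth xs a x0 (Hin a (or_intror (in_or_app _ _ _ (or_introl Ha))))) as [j [Hj Ej]].
      destruct (In_nth xs (h a) x0 (Hin (h a) (or_intror (in_or_app _ _ _ (or_intror (in_map h A a Ha)))))) as [j' [Hj' Ej']].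
      assert (Ed : forall k, ((k * n) / n = k /\ (k * n) mod n = 0)%nat).
      { intros k. replace (k * n)%nat with (k * n + 0)%nat by lia. apply divmod_eq; lia. }
      exists (j * n)%nat. 
      assert (Hpu : p (j * n)%nat = a).
      { rewrite Hp1 by (split; [apply Ed|fold m in Hj; nia]). unfold Xof. rewrite (proj1 (Ed j)). auto. }
      split; [fold m in Hj; nia|split; auto].
      assert (Hpv : p (j' * n)%nat = h a).
      { rewrite Hp1 by (split; [apply Ed|fold m in Hj'; nia]). unfold Xof. rewrite (proj1 (Ed j')). auto. }
      rewrite <- Hpv.
      assert (sg n (j * n)%nat < m * n)%nat.
      { change (sg n (j * n)%nat) with (fpow (sg n) 1 (j * n)%nat). apply sg_lt; fold m in Hj; nia. }
      rewrite Hp2 by (auto; fold m in Hj'; nia).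
      unfold r. eapply Rle_lt_trans; [apply rho_approx; [auto|lia|apply Ed|apply Ed|]|].
      * unfold Xof. rewrite (proj1 (Ed j)), (proj1 (Ed j')). rewrite Ej, Ej'. auto.
      * unfold delta. lra.
Qed.

Open Scope R_scope.

Definition minl (F : nat -> R) (B : nat) : R :=
  fold_right (fun w acc => Rmin (F w) acc) (F 0%nat) (seq 0 B).

Lemma minl_le F B w : (w < B)%nat -> minl F B <= F w.
Proof.
  intros Hw. unfold minl. assert (Hi : In w (seq 0 B)) by (apply in_seq; lia).
  generalize Hi. clear. induction (seq 0 B) as [|a l IH]; simpl; [tauto|].
  intros [->|H]; [apply Rmin_l|]. eapply Rle_trans; [apply Rmin_r|auto].
Qed.

Lemma minl_att F B : (0 < B)%nat -> exists w, (w < B)%nat /\ minl F B = F w.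
Proof.
  intros HB. unfold minl.
  assert (forall l : list nat, (forall x, In x l -> x < B)%nat ->
    exists w, (w < B)%nat /\ fold_right (fun w acc => Rmin (F w) acc) (F 0%nat) l = F w).
  { induction l as [|a l IH]; simpl; intros Hl.
    - exists 0%nat; auto.
    - destruct IH as [w [Hw E]]; auto. rewrite E. unfold Rmin. destruct Rle_dec.
      + exists a; auto.
      + exists w; auto. }
  apply H. intros x Hx. apply in_seq in Hx. lia.
Qed.

Lemma minl_ext F G B : (forall w, F w = G w) -> minl F B = minl G B.
Proof. intros H. assert (F = G) by (apply functional_extensionality; auto). subst; auto. Qed.

Lemma InvK {U : Type} (d : U -> U -> R) n p L k u v : (0 < n)%nat -> Inv d n p L ->
  (u < L * n)%nat -> (v < L * n)%nat ->
  d (p (fpow (sg n) k u)) (p (fpow (sg n) k v)) = d (p u) (p v).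
Proof.
  intros Hn HI Hu Hv. induction k; simpl; auto.
  rewrite HI; auto; apply sg_lt; auto.
Qed.

Lemma new_block n L u : (0 < n)%nat -> (L * n <= u < S L * n)%nat ->
  (L * n <= sg n u < S L * n)%nat /\ (sg n u - L * n = (u - L * n + 1) mod n)%nat.
Proof.
  intros Hn Hu.
  assert (Hr : (u - L * n < n)%nat) by (simpl in Hu; lia).
  destruct (divmod_eq n L (u - L * n) Hn Hr) as [E1 E2].
  replace (L * n + (u - L * n))%nat with u in E1, E2 by lia.
  change (sg n u) with (fpow (sg n) 1 u). rewrite sg_closed by auto. rewrite E1, E2.
  assert ((u - L * n + 1) mod n < n)%nat by (apply Nat.mod_upper_bound; lia).
  set (z := ((u - L * n + 1) mod n)%nat) in *. clearbody z. clear E1 E2. simpl. split; nia.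
Qed.

Lemma shift_id n i : (0 < n)%nat -> (i < n)%nat -> (S (n - (i + 1) mod n) mod n = (n - i) mod n)%nat.
Proof.
  intros Hn Hi. destruct (Nat.eq_dec (i + 1) n) as [E|E].
  - rewrite E, Nat.Div0.mod_same. replace (n - i)%nat with 1%nat by lia.
    replace (S (n - 0)) with (1 + 1 * n)%nat by lia. rewrite Nat.Div0.mod_add. reflexivity.
  - rewrite (Nat.mod_small (i + 1)) by lia. f_equal. lia.
Qed.

Section Amal.
Variable U : Type.
Variable d : U -> U -> R.
Hypothesis Hd : is_metric d.
Variable n L : nat.
Hypothesis Hn : (1 <= n)%nat.
Hypothesis HL : (1 <= L)%nat.
Variable p : nat -> U.
Hypothesis HI : Inv d n p L.
Variable y : U.
Hypothesis Hy : forall u, (u < L * n)%nat -> p u <> y.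

Let B := (L * n)%nat.
Lemma B_pos : (0 < B)%nat. Proof. unfold B. nia. Qed.

Definition ee (i w : nat) : R := d y (p (fpow (sg n) (n - i) w)).
Definition MM (i k : nat) : R := minl (fun w => ee i w + ee k w) B.
Definition Rnn (i k : nat) : R := if Nat.eq_dec i k then 0 else MM i k.
Definition ramal (u v : nat) : R :=
  if lt_dec u B then (if lt_dec v B then d (p u) (p v) else ee (v - B) u)
  else (if lt_dec v B then ee (u - B) v else Rnn (u - B) (v - B)).

Let adsym a b : d a b = d b a. Proof. destruct Hd as [_ [_ [? _]]]; auto. Qed.
Let adtri a b c : d a c <= d a b + d b c. Proof. destruct Hd as [_ [_ [_ ?]]]; auto. Qed.
Let adnn a b : 0 <= d a b. Proof. destruct Hd as [? _]; auto. Qed.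
Let adz a b : d a b = 0 <-> a = b. Proof. destruct Hd as [_ [? _]]; auto. Qed.

Lemma ee_nn i w : 0 <= ee i w. Proof. apply adnn. Qed.
Lemma ee_pos i w : (w < B)%nat -> 0 < ee i w.
Proof.
  intros Hw. unfold ee. destruct (Rle_lt_or_eq_dec 0 _ (adnn y (p (fpow (sg n) (n - i) w)))) as [H|H]; auto.
  exfalso. symmetry in H. apply adz in H. apply (Hy (fpow (sg n) (n - i) w)); auto.
  apply sg_lt; unfold B in Hw; auto; lia.
Qed.

Lemma T2 k a b : (a < B)%nat -> (b < B)%nat -> ee k a <= d (p a) (p b) + ee k b.
Proof.
  intros Ha Hb. unfold ee. rewrite <- (InvK d n p L (n - k) a b); auto; try lia.
  rewrite (adsym (p (fpow _ _ a))). rewrite Rplus_comm. apply adtri.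
Qed.

Lemma T3 i a c : (a < B)%nat -> (c < B)%nat -> d (p a) (p c) <= ee i a + ee i c.
Proof.
  intros Ha Hc. unfold ee. rewrite <- (InvK d n p L (n - i) a c); auto; try lia.
  rewrite (adsym y (p (fpow (sg n) (n - i) a))). apply adtri.
Qed.

Lemma Rnn_nn i k : 0 <= Rnn i k.
Proof.
  unfold Rnn. destruct Nat.eq_dec; [lra|]. unfold MM.
  destruct (minl_att (fun w => ee i w + ee k w) B B_pos) as [w [_ ->]].
  pose proof (ee_nn i w). pose proof (ee_nn k w). lra.
Qed.

Lemma T6 i k b : (b < B)%nat -> Rnn i k <= ee i b + ee k b.
Proof.
  intros Hb. unfold Rnn. destruct Nat.eq_dec.
  - pose proof (ee_nn i b). pose proof (ee_nn k b). lra.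
  - unfold MM. apply (minl_le (fun w => ee i w + ee k w)); auto.
Qed.

Lemma T4 i k a : (a < B)%nat -> ee k a <= ee i a + Rnn i k.
Proof.
  intros Ha. unfold Rnn. destruct Nat.eq_dec; [subst; lra|].
  unfold MM. destruct (minl_att (fun w => ee i w + ee k w) B B_pos) as [w [Hw ->]].
  pose proof (T2 k a w Ha Hw). pose proof (T3 i w a Hw Ha). rewrite (adsym (p w)) in H0. lra.
Qed.

Lemma T8 i k l : Rnn i l <= Rnn i k + Rnn k l.
Proof.
  pose proof (Rnn_nn i k). pose proof (Rnn_nn k l).
  destruct (Nat.eq_dec i l) as [E|E].
  - unfold Rnn at 1. destruct Nat.eq_dec; [lra|contradiction].
  - destruct (Nat.eq_dec i k) as [->|E1]; [unfold Rnn at 2; destruct Nat.eq_dec; [lra|contradiction]|].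
    destruct (Nat.eq_dec k l) as [->|E2]; [unfold Rnn at 3; destruct Nat.eq_dec; [lra|contradiction]|].
    unfold Rnn at 2. destruct Nat.eq_dec; [contradiction|]. unfold MM.
    destruct (minl_att (fun w => ee i w + ee k w) B B_pos) as [w [Hw ->]].
    pose proof (T6 i l w Hw). pose proof (T4 k l w Hw). lra.
Qed.

Lemma Rnn_sym i k : Rnn i k = Rnn k i.
Proof.
  unfold Rnn. destruct (Nat.eq_dec i k); destruct (Nat.eq_dec k i); subst; try lia; auto.
  unfold MM. apply minl_ext. intros; ring.
Qed.

Lemma ramal_pseudo : pseudo_on (S L * n) ramal.
Proof.
  intros a b c Ha Hb Hc. unfold ramal. split; [|split; [|split]].
  - destruct (lt_dec a B); destruct (lt_dec b B); auto using ee_nn, Rnn_nn.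
  - destruct (lt_dec a B). + apply adz; auto. + unfold Rnn. destruct Nat.eq_dec; auto; lia.
  - destruct (lt_dec a B); destruct (lt_dec b B); auto using Rnn_sym.
  - destruct (lt_dec a B); destruct (lt_dec b B); destruct (lt_dec c B).
    + apply adtri.
    + apply T2; auto.
    + apply T3; auto.
    + apply T4; auto.
    + rewrite Rplus_comm, adsym. apply T2; auto.
    + apply T6; auto.
    + rewrite Rnn_sym. rewrite Rplus_comm. apply T4; auto.
    + apply T8.
Qed.

Lemma ramal_pos a b : (a < S L * n)%nat -> (b < S L * n)%nat -> ~ (b < B)%nat -> a <> b -> 0 < ramal a b.
Proof.
  intros Ha Hb Hb' Hab. unfold ramal. destruct (lt_dec a B); destruct (lt_dec b B); try contradiction.
  - apply ee_pos; auto.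
  - unfold Rnn. destruct Nat.eq_dec; [lia|]. unfold MM.
    destruct (minl_att (fun w => ee (a - B) w + ee (b - B) w) B B_pos) as [w [Hw ->]].
    pose proof (ee_pos (a - B) w Hw). pose proof (ee_pos (b - B) w Hw). lra.
Qed.

Lemma ee_shift i w : (i < n)%nat -> ee ((i + 1) mod n) (sg n w) = ee i w.
Proof.
  intros Hi. unfold ee. f_equal. f_equal.
  rewrite fpow_shift. rewrite sg_modexp by lia. rewrite (sg_modexp n (n - i)) by lia.
  rewrite shift_id by lia. reflexivity.
Qed.

Lemma MM_shift i k : (i < n)%nat -> (k < n)%nat -> MM ((i + 1) mod n) ((k + 1) mod n) = MM i k.
Proof.
  intros Hi Hk. unfold MM. apply Rle_antisym.
  - destruct (minl_att (fun w => ee i w + ee k w) B B_pos) as [w [Hw ->]].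
    rewrite <- (ee_shift i w Hi), <- (ee_shift k w Hk).
    apply (minl_le (fun w => ee ((i + 1) mod n) w + ee ((k + 1) mod n) w)).
    change (sg n w) with (fpow (sg n) 1 w). apply sg_lt; unfold B in Hw; auto; lia.
  - destruct (minl_att (fun w => ee ((i + 1) mod n) w + ee ((k + 1) mod n) w) B B_pos) as [w [Hw ->]].
    set (w0 := fpow (sg n) (n - 1) w).
    assert (E : sg n w0 = w).
    { unfold w0. change (sg n (fpow (sg n) (n - 1) w)) with (fpow (sg n) (S (n - 1)) w).
      replace (S (n - 1)) with n by lia. apply sg_n. lia. }
    rewrite <- E. rewrite (ee_shift i w0 Hi), (ee_shift k w0 Hk).
    apply (minl_le (fun w => ee i w + ee k w)).
    unfold w0. apply sg_lt; unfold B in Hw; auto; lia.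
Qed.

Lemma ramal_inv a b : (a < S L * n)%nat -> (b < S L * n)%nat -> ramal (sg n a) (sg n b) = ramal a b.
Proof.
  intros Ha Hb.
  assert (Hold : forall u, (u < B)%nat -> (sg n u < B)%nat).
  { intros u Hu. change (sg n u) with (fpow (sg n) 1 u). apply sg_lt; unfold B in *; auto; lia. }
  assert (Hnew : forall u, (u < S L * n)%nat -> ~ (u < B)%nat ->
     ~ (sg n u < B)%nat /\ (sg n u - B = (u - B + 1) mod n)%nat /\ (u - B < n)%nat).
  { intros u Hu Hu'. destruct (new_block n L u) as [H1 H2]; [lia|unfold B in *; lia|].
    unfold B in *. split; [lia|split; auto]. simpl in Hu. lia. }
  unfold ramal.
  destruct (lt_dec a B) as [Ha'|Ha']; destruct (lt_dec b B) as [Hb'|Hb'].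
  - destruct (lt_dec (sg n a) B); [|exfalso; auto]. destruct (lt_dec (sg n b) B); [|exfalso; auto].
    apply HI; unfold B in *; auto.
  - destruct (lt_dec (sg n a) B); [|exfalso; auto].
    destruct (Hnew b Hb Hb') as [N1 [N2 N3]].
    destruct (lt_dec (sg n b) B); [contradiction|]. rewrite N2. apply ee_shift; auto.
  - destruct (lt_dec (sg n b) B); [|exfalso; auto].
    destruct (Hnew a Ha Ha') as [N1 [N2 N3]].
    destruct (lt_dec (sg n a) B); [contradiction|]. rewrite N2. apply ee_shift; auto.
  - destruct (Hnew a Ha Ha') as [N1 [N2 N3]]. destruct (Hnew b Hb Hb') as [M1 [M2 M3]].
    destruct (lt_dec (sg n a) B); [contradiction|]. destruct (lt_dec (sg n b) B); [contradiction|].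
    rewrite N2, M2. unfold Rnn.
    destruct (Nat.eq_dec (a - B) (b - B)) as [E|E].
    + rewrite E. destruct Nat.eq_dec; auto. contradiction.
    + destruct Nat.eq_dec as [E'|E'].
      * exfalso. apply E.
        assert (Hmi : forall i, (i < n)%nat -> ((i + 1) mod n = if Nat.eq_dec (i + 1) n then 0 else i + 1)%nat).
        { intros i Hi. destruct Nat.eq_dec as [e|e]. rewrite e. apply Nat.Div0.mod_same. apply Nat.mod_small. lia. }
        rewrite (Hmi _ N3), (Hmi _ M3) in E'. repeat destruct Nat.eq_dec; lia.
      * apply MM_shift; auto.
Qed.

End Amal.

Lemma step {U : Type} (d : U -> U -> R) (n L : nat) (p : nat -> U) (y : U) :
  is_metric d -> urysohn_extension_property d -> (1 <= n)%nat -> (1 <= L)%nat -> Inv d n p L ->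
  exists p', (forall u, (u < L * n)%nat -> p' u = p u) /\ Inv d n p' (S L) /\
    exists u, (u < S L * n)%nat /\ p' u = y.
Proof.
  intros Hd Hu Hn HL HI.
  destruct (classic (exists u0, (u0 < L * n)%nat /\ p u0 = y)) as [[u0 [Hu0 E0]]|Hno].
  - set (q := fun u => if lt_dec u (L * n) then u else fpow (sg n) (u - L * n) u0).
    exists (fun u => p (q u)). split; [|split].
    + intros u Hu'. unfold q. destruct lt_dec; auto; contradiction.
    + assert (Hq : forall u, (u < S L * n)%nat -> q (sg n u) = sg n (q u) /\ (q u < L * n)%nat).
      { intros u Hu'. unfold q. destruct (lt_dec u (L * n)) as [H|H].
        - assert (sg n u < L * n)%nat by (change (sg n u) with (fpow (sg n) 1 u); apply sg_lt; auto; lia).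
          destruct lt_dec; [split; auto|contradiction].
        - destruct (new_block n L u) as [[H1 H2] H3]; [lia|lia|].
          destruct lt_dec; [lia|]. split.
          + rewrite H3. rewrite <- sg_modexp by lia.
            change (sg n (fpow (sg n) (u - L * n) u0)) with (fpow (sg n) (S (u - L * n)) u0).
            f_equal. lia.
          + apply sg_lt; auto; lia. }
      intros u v Hu' Hv'. destruct (Hq u Hu') as [E1 B1]. destruct (Hq v Hv') as [E2 B2].
      rewrite E1, E2. apply HI; auto.
    + exists (L * n)%nat. split; [simpl; lia|]. unfold q. destruct lt_dec; [lia|].
      rewrite Nat.sub_diag. simpl. auto.
  - assert (Hy : forall u, (u < L * n)%nat -> p u <> y) by (intros u Hu' E; apply Hno; eauto).
    set (f := fun u => if lt_dec u (L * n) then p u else y).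
    destruct (ext_all d (ramal U d n L p y) (S L * n) (fun u => (u <= L * n)%nat) f Hd Hu
        (ramal_pseudo U d Hd n L Hn HL p HI y)) as [p' [H1 H2]].
    + intros i Hi; simpl; lia.
    + intros i j Hi Hj Hj' Hij. apply ramal_pos; auto. lia.
    + assert (Hd' := Hd). destruct Hd' as [_ [dz [ds _]]].
      intros i j Hi Hj. unfold ramal, f.
      destruct (lt_dec i (L * n)); destruct (lt_dec j (L * n)).
      * auto.
      * assert (j = L * n)%nat by lia. subst j. rewrite Nat.sub_diag. unfold ee.
        rewrite Nat.sub_0_r, sg_n by lia. apply ds.
      * assert (i = L * n)%nat by lia. subst i. rewrite Nat.sub_diag. unfold ee.
        rewrite Nat.sub_0_r, sg_n by lia. auto.
      * assert (i = L * n)%nat by lia. assert (j = L * n)%nat by lia. subst i j.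
        unfold Rnn. destruct Nat.eq_dec; [|lia]. apply dz. auto.
    + exists p'. split.
      * intros u Hu'. rewrite H1 by lia. unfold f. destruct lt_dec; auto; contradiction.
      * split.
        -- intros u v Hu' Hv'.
           assert (sg n u < S L * n)%nat by (change (sg n u) with (fpow (sg n) 1 u); apply sg_lt; auto; lia).
           assert (sg n v < S L * n)%nat by (change (sg n v) with (fpow (sg n) 1 v); apply sg_lt; auto; lia).
           rewrite !H2 by auto. apply ramal_inv; auto.
        -- exists (L * n)%nat. split; [simpl; lia|].
           rewrite H1 by lia. unfold f. destruct lt_dec; auto; lia.
Qed.

Open Scope R_scope.

Lemma build {U : Type} (d : U -> U -> R) (n m : nat) (p0 : nat -> U) (s : nat -> U) :
  is_metric d -> urysohn_extension_property d -> (1 <= n)%nat -> (1 <= m)%nat -> Inv d n p0 m ->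
  exists q : nat -> U, (forall u, (u < m * n)%nat -> q u = p0 u) /\
    (forall u v, d (q (sg n u)) (q (sg n v)) = d (q u) (q v)) /\
    (forall k, exists u, q u = s k).
Proof.
  intros Hd Hu Hn Hm H0.
  assert (stepF : forall k (p : nat -> U), exists p', Inv d n p (m + k) ->
    (forall u, (u < (m + k) * n)%nat -> p' u = p u) /\ Inv d n p' (S (m + k)) /\
    exists u, (u < S (m + k) * n)%nat /\ p' u = s k).
  { intros k p. destruct (classic (Inv d n p (m + k))) as [HI|HI].
    - destruct (step d n (m + k) p (s k) Hd Hu Hn ltac:(lia) HI) as [p' Hp']. exists p'. auto.
    - exists p. intros; contradiction. }
  set (F := fun k p => proj1_sig (constructive_indefinite_description _ (stepF k p))).
  assert (HF : forall k p, Inv d n p (m + k) ->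
    (forall u, (u < (m + k) * n)%nat -> F k p u = p u) /\ Inv d n (F k p) (S (m + k)) /\
    exists u, (u < S (m + k) * n)%nat /\ F k p u = s k).
  { intros k p. unfold F. destruct constructive_indefinite_description; simpl; auto. }
  set (P := fix P (k : nat) : nat -> U := match k with O => p0 | S k' => F k' (P k') end).
  assert (HP : forall k, Inv d n (P k) (m + k)).
  { induction k; simpl. - rewrite Nat.add_0_r. auto.
    - replace (m + S k)%nat with (S (m + k)) by lia. apply HF. auto. }
  assert (Hag : forall k j u, (u < (m + k) * n)%nat -> P (k + j)%nat u = P k u).
  { intros k j u Hu'. induction j.
    - rewrite Nat.add_0_r. auto.
    - replace (k + S j)%nat with (S (k + j)) by lia. simpl.
      rewrite (proj1 (HF _ _ (HP (k + j)%nat))); auto. nia. }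
  set (q := fun u => P u u).
  assert (Hst : forall k u, (u < (m + k) * n)%nat -> q u = P k u).
  { intros k u Hu'. unfold q. destruct (le_lt_dec k u).
    - replace u with (k + (u - k))%nat at 1 by lia. apply Hag; auto.
    - replace k with (u + (k - u))%nat by lia. symmetry. apply Hag. nia. }
  exists q. split; [|split].
  - intros u Hu'. rewrite (Hst 0%nat) by lia. reflexivity.
  - intros u v. set (K := (u + v)%nat).
    assert (u < (m + K) * n)%nat by (unfold K; nia).
    assert (v < (m + K) * n)%nat by (unfold K; nia).
    assert (sg n u < (m + K) * n)%nat by (change (sg n u) with (fpow (sg n) 1 u); apply sg_lt; auto; lia).
    assert (sg n v < (m + K) * n)%nat by (change (sg n v) with (fpow (sg n) 1 v); apply sg_lt; auto; lia).
    rewrite !(Hst K) by auto. apply HP; auto.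
  - intros k. destruct (HF k (P k) (HP k)) as [_ [_ [u [Hu' E]]]].
    exists u. rewrite (Hst (S k)) by (replace (m + S k)%nat with (S (m + k)) by lia; auto).
    simpl. auto.
Qed.

Open Scope R_scope.

Lemma small_inv eps : 0 < eps -> exists N, forall k, (N <= k)%nat -> / (INR k + 1) < eps.
Proof.
  intros He. destruct (archimed (/ eps)) as [Hz _].
  exists (Z.to_nat (up (/ eps))). intros k Hk.
  assert (IZR (up (/ eps)) <= INR k).
  { rewrite INR_IZR_INZ. apply IZR_le. destruct (Z_lt_le_dec (up (/ eps)) 0); lia. }
  rewrite <- (Rinv_inv eps).
  apply Rinv_lt_contravar.
  - apply Rmult_lt_0_compat; [apply Rinv_0_lt_compat; auto|]. pose proof (pos_INR k). lra.
  - lra.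
Qed.

Lemma zero_of_small (X : R) : 0 <= X -> (forall eps, 0 < eps -> X <= eps) -> X = 0.
Proof.
  intros H1 H2. destruct (Rle_lt_or_eq_dec 0 X H1) as [H|H]; auto.
  specialize (H2 (X / 2)). lra.
Qed.

Lemma eq_of_small (X Y : R) : (forall eps, 0 < eps -> Rabs (X - Y) <= eps) -> X = Y.
Proof.
  intros H. assert (Rabs (X - Y) = 0) by (apply zero_of_small; auto; apply Rabs_pos).
  destruct (Rcase_abs (X - Y)); [rewrite Rabs_left in H0 by auto|rewrite Rabs_right in H0 by auto]; lra.
Qed.

Lemma quad {U : Type} (d : U -> U -> R) a b a' b' : is_metric d ->
  Rabs (d a b - d a' b') <= d a a' + d b b'.
Proof.
  intros [_ [_ [ds dt]]].
  pose proof (dt a a' b). pose proof (dt a' b' b). pose proof (dt a' a b'). pose proof (dt a b b').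
  rewrite (ds a' a) in *. rewrite (ds b' b) in *.
  apply Rabs_le. split; lra.
Qed.

Lemma complete_ext {U : Type} (d : U -> U -> R) (n : nat) (q : nat -> U) :
  is_metric d -> complete_metric d -> (1 <= n)%nat ->
  (forall u v, d (q (sg n u)) (q (sg n v)) = d (q u) (q v)) ->
  (forall x eps, 0 < eps -> exists u, d (q u) x < eps) ->
  exists g, is_isometry d g /\ (forall x, fpow g n x = x) /\ (forall u, g (q u) = q (sg n u)).
Proof.
  intros Hd Hc Hn Hinv Hden.
  assert (Hd' := Hd). destruct Hd' as [dnn [dz [ds dt]]].
  assert (Wex : forall x k, exists u, d (q u) x < / (INR k + 1)).
  { intros x k. apply Hden. apply Rinv_0_lt_compat. pose proof (pos_INR k). lra. }
  set (W := fun x k => proj1_sig (constructive_indefinite_description _ (Wex x k))).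
  assert (HW : forall x k, d (q (W x k)) x < / (INR k + 1)).
  { intros x k. unfold W. destruct constructive_indefinite_description; simpl; auto. }
  set (z := fun x k => q (sg n (W x k))).
  assert (Hcau : forall x, cauchy_seq d (z x)).
  { intros x eps He. destruct (small_inv (eps / 2)) as [N HN]; [lra|].
    exists N. intros a b Ha Hb. unfold z. rewrite Hinv.
    pose proof (HW x a). pose proof (HW x b). pose proof (HN a Ha). pose proof (HN b Hb).
    pose proof (dt (q (W x a)) x (q (W x b))). rewrite (ds x) in H3. lra. }
  assert (Lex : forall x, exists l, converges_to d (z x) l) by (intros x; apply Hc; auto).
  set (g := fun x => proj1_sig (constructive_indefinite_description _ (Lex x))).
  assert (Hg : forall x, converges_to d (z x) (g x)).
  { intros x. unfold g. destruct constructive_indefinite_description; simpl; auto. }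
  assert (Hgq : forall u, g (q u) = q (sg n u)).
  { intros u. apply dz. apply zero_of_small; auto. intros eps He.
    destruct (Hg (q u) (eps / 2)) as [N1 HN1]; [lra|].
    destruct (small_inv (eps / 2)) as [N2 HN2]; [lra|].
    set (k := Nat.max N1 N2).
    pose proof (HN1 k ltac:(lia)). pose proof (HN2 k ltac:(lia)).
    pose proof (HW (q u) k).
    pose proof (dt (g (q u)) (z (q u) k) (q (sg n u))).
    unfold z in *. rewrite Hinv in H2. rewrite (ds (g (q u)) (q (sg n (W (q u) k)))) in H2. lra. }
  assert (Hiso : isometric_embedding d d g).
  { intros x y. apply eq_of_small. intros eps He.
    destruct (Hg x (eps / 4)) as [N1 HN1]; [lra|].
    destruct (Hg y (eps / 4)) as [N2 HN2]; [lra|].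
    destruct (small_inv (eps / 4)) as [N3 HN3]; [lra|].
    set (k := Nat.max N1 (Nat.max N2 N3)).
    pose proof (HN1 k ltac:(lia)) as A1. pose proof (HN2 k ltac:(lia)) as A2. pose proof (HN3 k ltac:(lia)) as A3.
    pose proof (HW x k) as A4. pose proof (HW y k) as A5.
    pose proof (quad d (g x) (g y) (z x k) (z y k) Hd) as A6.
    pose proof (quad d (q (W x k)) (q (W y k)) x y Hd) as A7.
    unfold z in *. rewrite Hinv in A6.
    rewrite (ds (g x) (q (sg n (W x k)))), (ds (g y) (q (sg n (W y k)))) in A6.
    assert (Rabs (d (g x) (g y) - d x y) <= Rabs (d (g x) (g y) - d (q (W x k)) (q (W y k))) +
             Rabs (d (q (W x k)) (q (W y k)) - d x y)).
    { replace (d (g x) (g y) - d x y) with ((d (g x) (g y) - d (q (W x k)) (q (W y k))) +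
             (d (q (W x k)) (q (W y k)) - d x y)) by ring. apply Rabs_triang. }
    lra. }
  assert (Hpow : forall k u, fpow g k (q u) = q (fpow (sg n) k u)).
  { induction k; intros u; simpl; auto. rewrite IHk. apply Hgq. }
  assert (Hper : forall x, fpow g n x = x).
  { intros x. apply dz. apply zero_of_small; auto. intros eps He.
    destruct (Hden x (eps / 2)) as [u Hu]; [lra|].
    pose proof (dt (fpow g n x) (fpow g n (q u)) x).
    rewrite fpow_iso in H by auto. rewrite Hpow, sg_n in H by lia.
    rewrite (ds x) in H. lra. }
  exists g. split; [split|split]; auto.
  intros y. exists (fpow g (n - 1) y).
  change (g (fpow g (n - 1) y)) with (fpow g (S (n - 1)) y).
  replace (S (n - 1)) with n by lia. auto.
Qed.

Open Scope R_scope.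

Theorem mainTheorem16 (U : Type) (d : U -> U -> R) (S : nat -> Prop) :
  urysohn_space d ->
  infinite_nat_set S ->
  dense_in_Iso d (fun g => exists n, S n /\ forall x, fpow g n x = x).
Proof.
  intros [Hd [Hc [[s Hs] Hu]]] HS h A eps [Hh Hhs] He.
  destruct (initial d h A (s 0%nat) eps Hd Hu Hh He) as [N0 HN0].
  destruct (HS (Nat.max N0 1)) as [n [Hn HSn]].
  destruct (HN0 n ltac:(lia)) as [m [p [Hm [HI Happ]]]].
  destruct (build d n m p s Hd Hu ltac:(lia) Hm HI) as [q [Hq1 [Hq2 Hq3]]].
  destruct (complete_ext d n q Hd Hc ltac:(lia) Hq2) as [g [Hg1 [Hg2 Hg3]]].
  { intros x e He'. destruct (Hs x e He') as [k Hk]. destruct (Hq3 k) as [u Hu'].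
    exists u. rewrite Hu'. destruct Hd as [_ [_ [ds _]]]. rewrite ds. auto. }
  exists g. split; auto. split; [exists n; auto|].
  intros a Ha. destruct (Happ a Ha) as [u [Hu1 [Hu2 Hu3]]].
  rewrite <- Hu2 at 1. rewrite <- Hq1 by auto. rewrite Hg3.
  rewrite Hq1; auto.
  change (sg n u) with (fpow (sg n) 1 u). apply sg_lt; lia.
Qed.
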